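(* Let $E$ be an evident branch, $\alpha$ a sort, and $a,b$ two different $\alpha$-discriminants. Then (1) there exist terms $s\in a$ and $t\in b$ such that $s\neq t\in E$ or $t\neq s\in E$; and (2) there exist no terms $s\in a$ and $t\in b$ such that $(s=t)\in E$.
   Context: Types: a countable set of base types including a distinguished $o$; other base types are sorts. Types: base types and $\sigma\tau$. Countably many names with unique types, infinitely many per type. Terms: names; $st:\mu$ for $s:\tau\mu,t:\tau$; $\lambda x.t:\sigma\tau$ for a name $x:\sigma$, $t:\tau$. $\mathrm{Wff}_\sigma$: terms of type $\sigma$. Logical constants: $\neg:oo$, $=_\sigma:\sigma\sigma o$; other names are variables. Formulas: terms of type $o$; $s=_\sigma t$ is $(=_\sigma s)t$; $s\neq_\sigma t$ is $\neg(s=_\sigma t)$. A fixed type-preserving total normalization operator $[\cdot]$ on terms, with $s$ normal iff $[s]=s$, satisfies $[[s]]=[s]$, $[[s]t]=[st]$, and $[xs_1\dots s_n]=x[s_1]\dots[s_n]$ for any name $x$, $n\ge0$, with $xs_1\dots s_n$ of base type. A branch is a set of normal formulas. $E$ is evident if ($x$ ranges over variables): (DN) $\neg\neg s\in E\Rightarrow s\in E$; (BQ) $s=_ot\in E\Rightarrow$ ($s,t\in E$ or $\neg s,\neg t\in E$); (BE) $s\neq_ot\in E\Rightarrow$ ($s,\neg t\in E$ or $\neg s,t\in E$); (FQ) $s=_{\sigma\tau}t\in E\Rightarrow[su]=[tu]\in E$ for all normal $u:\sigma$; (FE) $s\neq_{\sigma\tau}t\in E\Rightarrow[sx]\neq[tx]\in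 E$ for some variable $x$; (Mat) $xs_1\dots s_n,\neg xt_1\dots t_n\in E\Rightarrow n\ge1$ and $s_i\neq t_i\in E$ for some $i$; (Dec) $xs_1\dots s_n\neq_\alpha xt_1\dots t_n\in E\Rightarrow n\ge 1$ and $s_i\neq t_i\in E$ for some $i$; (Con) $s=_\alpha t,u\neq_\alpha v\in E\Rightarrow$ ($s\neq u,t\neq u\in E$) or ($s\neq v,t\neq v\in E$). A term $u\in\mathrm{Wff}_\alpha$ is $\alpha$-discriminating in $E$ if there is a term $t$ with $u\neq_\alpha t\in E$ or $t\neq_\alpha u\in E$. An $\alpha$-discriminant is a maximal (w.r.t. inclusion) set $a$ of $\alpha$-discriminating terms such that there is no disequation $s\neq t\in E$ with $s,t\in a$. *)

(* Defs.v *)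
From Stdlib Require Import List Arith.
Import ListNotations.

(* Types: base types indexed by nat (Base 0 = o, all others are sorts), and arrows. *)
Inductive ty : Type :=
| Base : nat -> ty
| Arr : ty -> ty -> ty.

Definition o : ty := Base 0.
Definition is_sort (a : ty) : Prop := exists b, a = Base b /\ b <> 0.

Inductive name : Type :=
| NVar : ty -> nat -> name
| NNeg : name
| NEq : ty -> name.

Definition nty (x : name) : ty :=
  match x with
  | NVar T _ => T
  | NNeg => Arr o o
  | NEq T => Arr T (Arr T o)
  end.

Definition is_var (x : name) : Prop := exists T n, x = NVar T n.

Inductive tm : Type :=
| Nm : name -> tm
| App : tm -> tm -> tm
| Lam : name -> tm -> tm.

Inductive hasty : tm -> ty -> Prop :=
| ty_Nm x : hasty (Nm x) (nty x)
| ty_App s t T U : hasty s (Arr T U) -> hasty t T -> hasty (App s t) U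
| ty_Lam x t U : hasty t U -> hasty (Lam x t) (Arr (nty x) U).

Definition Wff (T : ty) (s : tm) : Prop := hasty s T.

Definition apps (h : tm) (l : list tm) : tm := fold_left App l h.

Definition eqf (T : ty) (s t : tm) : tm := App (App (Nm (NEq T)) s) t.
Definition negf (s : tm) : tm := App (Nm NNeg) s.
Definition neqf (T : ty) (s t : tm) : tm := negf (eqf T s t).

Record NormOp : Type := {
  nf : tm -> tm;
  nf_type : forall s T, hasty s T -> hasty (nf s) T;
  nf_idem : forall s T, hasty s T -> nf (nf s) = nf s;
  nf_app : forall s t T, hasty (App s t) T -> nf (App (nf s) t) = nf (App s t);
  nf_head : forall x ss b, hasty (apps (Nm x) ss) (Base b) ->
      nf (apps (Nm x) ss) = apps (Nm x) (map nf ss)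
}.

Definition normal (N : NormOp) (s : tm) : Prop := nf N s = s.

Definition branch (N : NormOp) (E : tm -> Prop) : Prop :=
  forall s, E s -> hasty s o /\ normal N s.

Definition evident (N : NormOp) (E : tm -> Prop) : Prop :=
  (forall s, E (negf (negf s)) -> E s) /\
  (forall s t, E (eqf o s t) -> (E s /\ E t) \/ (E (negf s) /\ E (negf t))) /\
  (forall s t, E (neqf o s t) -> (E s /\ E (negf t)) \/ (E (negf s) /\ E t)) /\
  (forall S T s t, E (eqf (Arr S T) s t) ->
     forall u, hasty u S -> normal N u ->
       E (eqf T (nf N (App s u)) (nf N (App t u)))) /\
  (forall S T s t, E (neqf (Arr S T) s t) ->
     exists n, E (neqf T (nf N (App s (Nm (NVar S n)))) (nf N (App t (Nm (NVar S n)))))) /\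
  (forall x ss ts, is_var x -> E (apps (Nm x) ss) -> E (negf (apps (Nm x) ts)) ->
     1 <= length ss /\
     exists i S, i < length ss /\ i < length ts /\
       E (neqf S (nth i ss (Nm NNeg)) (nth i ts (Nm NNeg)))) /\
  (forall a x ss ts, is_sort a -> is_var x ->
     E (neqf a (apps (Nm x) ss) (apps (Nm x) ts)) ->
     1 <= length ss /\
     exists i S, i < length ss /\ i < length ts /\
       E (neqf S (nth i ss (Nm NNeg)) (nth i ts (Nm NNeg)))) /\
  (forall a s t u v, is_sort a -> E (eqf a s t) -> E (neqf a u v) ->
     (E (neqf a s u) /\ E (neqf a t u)) \/ (E (neqf a s v) /\ E (neqf a t v))).

Definition discriminating (E : tm -> Prop) (a : ty) (u : tm) : Prop :=
  Wff a u /\ exists t, E (neqf a u t) \/ E (neqf a t u).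

Definition pre_discriminant (E : tm -> Prop) (a : ty) (A : tm -> Prop) : Prop :=
  (forall u, A u -> discriminating E a u) /\
  ~ (exists s t, A s /\ A t /\ E (neqf a s t)).

Definition discriminant (E : tm -> Prop) (a : ty) (A : tm -> Prop) : Prop :=
  pre_discriminant E a A /\
  forall B, pre_discriminant E a B -> (forall u, A u -> B u) -> forall u, B u -> A u.

(* Main.v *)
Require Import Defs.
From Stdlib Require Import Classical.

Lemma union_eq (E : tm -> Prop) (al : ty) (A B : tm -> Prop) :
  discriminant E al A -> discriminant E al B ->
  (forall s t, A s -> B t -> ~ E (neqf al s t) /\ ~ E (neqf al t s)) ->
  forall u, A u <-> B u.
Proof.
  intros [[HA1 HA2] HAm] [[HB1 HB2] HBm] Hc.
  assert (HU : pre_discriminant E al (fun u => A u \/ B u)).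
  { split.
    - intros u [H|H]; auto.
    - intros [s [t [Hs [Ht He]]]].
      destruct Hs as [Hs|Hs]; destruct Ht as [Ht|Ht].
      + apply HA2; eauto.
      + exact (proj1 (Hc s t Hs Ht) He).
      + exact (proj2 (Hc t s Ht Hs) He).
      + apply HB2; eauto. }
  intro u; split; intro H.
  - apply (HBm _ HU); auto.
  - apply (HAm _ HU); auto.
Qed.

Theorem proposition6p4 (N : NormOp) (E : tm -> Prop) (al : ty)
  (A B : tm -> Prop) :
  branch N E -> evident N E -> is_sort al ->
  discriminant E al A -> discriminant E al B ->
  ~ (forall u, A u <-> B u) ->
  (exists s t, A s /\ B t /\ (E (neqf al s t) \/ E (neqf al t s))) /\
  ~ (exists s t, A s /\ B t /\ E (eqf al s t)).
Proof.
  intros Hbr Hev Hs HA HB Hne.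
  destruct Hev as [_ [_ [_ [_ [_ [_ [_ Con]]]]]]].
  split.
  - apply NNPP; intro Hn. apply Hne. apply (union_eq E al A B HA HB).
    intros s t Ha Hb; split; intro He; apply Hn; exists s, t; auto.
  - intros [s [t [Hsa [Htb Heq]]]]. apply Hne. apply (union_eq E al A B HA HB).
    destruct HA as [[_ HA2] _]. destruct HB as [[_ HB2] _].
    intros a b Ha Hb; split; intro He.
    + destruct (Con al s t a b Hs Heq He) as [[H1 _]|[_ H2]].
      * apply HA2; eauto.
      * apply HB2; eauto.
    + destruct (Con al s t b a Hs Heq He) as [[_ H2]|[H1 _]].
      * apply HB2; eauto.
      * apply HA2; eauto.
Qed.
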